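(* If $R$ is a strongly $*$-clean ring, then ${\rm psr}(R)=1$.
   Context: A $*$-ring is a ring with identity with an involution $*$. A projection is $p$ with $p^2=p=p^*$. $R$ is strongly $*$-clean if each element is the sum of a projection and a unit that commute with each other. ${\rm psr}(R)=1$ means: for any $a,b\in R$ with $aR+bR=R$ there is a projection $p$ such that $a+bp$ is a unit. *)

(* Defs.v *)
From mathcomp Require Import all_boot all_algebra.
Set Implicit Arguments. Unset Strict Implicit. Unset Printing Implicit Defensive.
Import GRing.Theory.
Local Open Scope ring_scope.

Definition is_involution (R : pzRingType) (s : R -> R) : Prop :=
  (forall x y : R, s (x + y) = s x + s y) /\
  (forall x y : R, s (x * y) = s y * s x) /\
  (forall x : R, s (s x) = x).

Definition is_unit (R : pzRingType) (u : R) : Prop :=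
  exists v : R, u * v = 1 /\ v * u = 1.

Definition is_projection (R : pzRingType) (s : R -> R) (p : R) : Prop :=
  p * p = p /\ s p = p.

Definition strongly_star_clean (R : pzRingType) (s : R -> R) : Prop :=
  forall a : R, exists p u : R,
    is_projection s p /\ is_unit u /\ a = p + u /\ p * u = u * p.

Definition psr_one (R : pzRingType) (s : R -> R) : Prop :=
  forall a b : R, (exists x y : R, a * x + b * y = 1) ->
    exists p : R, is_projection s p /\ is_unit (a + b * p).

(* Main.v *)
Require Import Defs.
From mathcomp Require Import all_boot all_algebra.
Import GRing.Theory.
Local Open Scope ring_scope.

Lemma inv_s1 (R : pzRingType) (s : R -> R) : is_involution s -> s 1 = 1.
Proof.
move=> [sD [sM sK]].
by rewrite -[s 1]mulr1 -{2}(sK 1) -sM mulr1 sK.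
Qed.

Lemma inv_s0 (R : pzRingType) (s : R -> R) : is_involution s -> s 0 = 0.
Proof.
move=> [sD _].
have := sD 0 0; rewrite addr0 => h.
by apply: (addrI (s 0)); rewrite addr0 -h.
Qed.

Lemma idem_proj (R : pzRingType) (s : R -> R) :
  is_involution s -> strongly_star_clean s -> forall f : R, f * f = f -> s f = f.
Proof.
move=> Hs Hc f ff.
case: (Hc f) => p [u [[pp sp] [[v [uv vu]] [fpu pu]]]].
have ue : u = f - p by rewrite fpu addrC addKr.
have pf : p * f = f * p.
  by rewrite fpu mulrDr mulrDl pp pu.
have fp0 : f * p = 0.
  have h : u * (f * p) = 0.
    by rewrite ue mulrBl !mulrA ff pf -mulrA pp subrr.
  by rewrite -[f * p]mul1r -vu -mulrA h mulr0.
have h1 : 1 - f - p = 0.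
  have h : u * (1 - f - p) = 0.
    rewrite ue !mulrBr mulr1 !mulrBl ff pp fp0 pf fp0.
    by rewrite !subr0 sub0r opprK addrAC subrK subrr.
  by have := congr1 (fun z => v * z) h; rewrite /= mulrA vu mul1r mulr0.
have fe : f = 1 - p.
  by rewrite -(subr0_eq h1) opprB addrC subrK.
have [sD _] := Hs.
have h2 : s f + s p = s 1 by rewrite -sD fe subrK.
rewrite (@inv_s1 _ _ Hs) sp in h2.
have -> : s f = 1 - p by rewrite -h2 addrK.
by rewrite fe.
Qed.

Arguments idem_proj {R s}.
Arguments inv_s1 {R s}.

Lemma nil_zero (R : pzRingType) (s : R -> R) :
  is_involution s -> strongly_star_clean s ->
  forall e z : R, e * e = e -> e * z = z -> z * e = 0 -> z = 0.
Proof.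
move=> Hs Hc e z ee ez ze.
have [sD [sM sK]] := Hs.
have se : s e = e := idem_proj Hs Hc _ ee.
have ff : (e + z) * (e + z) = e + z.
  have zz : z * z = 0 by rewrite -{2}ez mulrA ze mul0r.
  by rewrite mulrDl !mulrDr ee ez ze zz addr0 addr0.
have sz : s z = z.
  have := idem_proj Hs Hc _ ff; rewrite sD se => h; exact: (addrI e).
by rewrite -sz -ez sM sz se ze.
Qed.

Arguments nil_zero {R s}.

Lemma idem_central (R : pzRingType) (s : R -> R) :
  is_involution s -> strongly_star_clean s ->
  forall e : R, e * e = e -> forall x, e * x = x * e.
Proof.
move=> Hs Hc e ee x.
have h1 : e * x * (1 - e) = 0.
  apply: (nil_zero Hs Hc _ _ ee).
    by rewrite !mulrA ee.
  by rewrite -!mulrA mulrBl mul1r ee subrr !mulr0.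
have ee' : (1 - e) * (1 - e) = 1 - e.
  by rewrite mulrBl mul1r mulrBr mulr1 ee subrr subr0.
have h2 : (1 - e) * x * e = 0.
  apply: (nil_zero Hs Hc _ _ ee').
    by rewrite !mulrA ee'.
  by rewrite -!mulrA mulrBr mulr1 ee subrr !mulr0.
rewrite mulrBr mulr1 in h1.
rewrite mulrBl mul1r mulrBl in h2.
by rewrite (subr0_eq h1) (subr0_eq h2).
Qed.

Arguments idem_central {R s}.

Lemma rinv_unit (R : pzRingType) (s : R -> R) :
  is_involution s -> strongly_star_clean s ->
  forall w r : R, w * r = 1 -> is_unit w.
Proof.
move=> Hs Hc w r wr.
exists r; split => //.
have ff : r * w * (r * w) = r * w by rewrite mulrA -(mulrA r) wr mulr1.
have C := idem_central Hs Hc _ ff.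
have h : 1 - r * w = 0.
  have h0 : (1 - r * w) * w = 0.
    by rewrite mulrBl mul1r C mulrA wr mul1r subrr.
  by rewrite -[1 - r * w]mulr1 -{2}wr mulrA h0 mul0r.
by rewrite (subr0_eq h).
Qed.
Arguments rinv_unit {R s}.

Lemma addid (V : zmodType) (o e M : V) : (o - e) - -((M - (o - e)) + o) + (0 - M) = o.
Proof.
rewrite sub0r opprK addrA [_ + (M - _)]addrC subrK addrAC subrr add0r //.
Qed.

Theorem corollary4p6 (R : pzRingType) (s : R -> R) :
  is_involution s -> strongly_star_clean s -> psr_one s.
Proof.
move=> Hs Hc a b [x [y Hxy]].
have C := idem_central Hs Hc.
case: (Hc (a*x)) => e1 [u1 [[e1e se1] [[v1 [uv1 vu1]] [Hax _]]]].
have C1 := C _ e1e.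
pose b' := - (y * v1 * e1).
have by1 : b * y = 1 - e1 - u1.
  have -> : 1 - e1 - u1 = 1 - a * x by rewrite Hax opprD addrA.
  by rewrite -Hxy [a * x + _]addrC addrK.
have bb' : b * b' = e1.
  rewrite /b' mulrN !mulrA by1 !mulrBl mul1r uv1 mul1r (C1 v1) -mulrA e1e subrr sub0r.
  by rewrite opprK.
have b'e1 : b' * e1 = b' by rewrite /b' mulNr -mulrA e1e.
case: (Hc (-(a*b'))) => e2 [u2 [[e2e se2] [[v2 [uv2 vu2]] [Hc2 _]]]].
have C2 := C _ e2e.
exists (e1 * e2); split.
  split; first by rewrite mulrA -(mulrA e1) (C2 e1) mulrA e1e -mulrA e2e.
  by have [_ [sM _]] := Hs; rewrite sM se1 se2 C2.
apply: (rinv_unit Hs Hc _ (x*v1*(1-e1) - b'*v2)).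
have E0 : (1 - e1) * e1 = 0 by rewrite mulrBl mul1r e1e subrr.
have E0' : e1 * (1 - e1) = 0 by rewrite C1 E0.
have T1 : a * (x * v1 * (1 - e1)) = 1 - e1.
  by rewrite !mulrA Hax mulrDl uv1 mulrDl (C1 v1) -mulrA E0' mulr0 add0r mul1r.
have T3 : b * (e1 * e2) * (x * v1 * (1 - e1)) = 0.
  by rewrite -(C2 e1) -!mulrA C1 -!mulrA E0 !mulr0.
have e1b' : e1 * b' = b' by rewrite C1 b'e1.
have T4 : b * (e1 * e2) * (b' * v2) = e1 * e2 * v2.
  rewrite -(C2 e1) -!mulrA (mulrA e1) e1b' (mulrA e2) (C2 b') !mulrA bb'.
  by rewrite (C1 e2).
have ab' : a * b' = - (e2 + u2) by rewrite -Hc2 opprK.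
have T2 : a * (b' * v2) = - (e2 * v2 + 1) by rewrite mulrA ab' mulNr mulrDl uv2.
have F5 : e2 * v2 * (1 - e1) = - (1 - e1).
  have b0 : b' * (1 - e1) = 0 by rewrite mulrBr mulr1 b'e1 subrr.
  have h0 : (e2 + u2) * (1 - e1) = 0 by rewrite -Hc2 mulNr -mulrA b0 mulr0 oppr0.
  have h1 : v2 * ((e2 + u2) * (1 - e1)) = 0 by rewrite h0 mulr0.
  rewrite mulrA (mulrDr v2) vu2 (mulrDl _ 1) mul1r -(C2 v2) in h1.
  by apply/eqP; rewrite -addr_eq0; apply/eqP.
have K : e2 * v2 = e1 * e2 * v2 - (1 - e1).
  by rewrite -F5 mulrBr mulr1 -(C1 (e2 * v2)) mulrA addrC subrK.
rewrite mulrDl (mulrBr a) (mulrBr (b * (e1 * e2))) T1 T2 T3 T4 K.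
exact: addid.
Qed.
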